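(* Let $\mathscr{C}=\{C_j\}_{j\in I}$ be a polycylinder packing of $\mathbb{R}^{n+2}$, fix $i\in I$, and let $x$ be a point of the core $a_i$ of $C_i$. Then every vertex of the Dirichlet slice $d_x$ is not closer to the circle $S_x(1)$ than the vertices of a regular hexagon circumscribed about $S_x(1)$; that is, every vertex $v$ of $d_x$ satisfies $|v-x|\ge 2/\sqrt{3}$.
   Context: A polycylinder is a subset of $\mathbb{R}^{n+2}$ isometric to $\mathbb{D}^2\times\mathbb{R}^n$, where $\mathbb{D}^2$ is the closed unit disk. A polycylinder packing of $\mathbb{R}^{n+2}$ is a countable family of polycylinders with mutually disjoint interiors. The core $a_j$ of a polycylinder $C_j$ is the $n$-dimensional affine subspace such that $C_j$ is the set of points at distance at most $1$ from $a_j$. The Dirichlet cell $D_i$ of $C_i$ is the set of points of $\mathbb{R}^{n+2}$ no further from $C_i$ than from any other polycylinder of the packing. For $x\in a_i$, $p_x$ is the $2$-dimensional affine plane through $x$ orthogonal to $a_i$, the Dirichlet slice is $d_x=D_i\cap p_x$, and $S_x(r)$ denotes the circle of radius $r$ in $p_x$ centered at $x$. A vertex of $d_x$ is a boundary point of $d_x$ at which $C_i$ and at least two other polycylinders of the packing are equidistant (i.e. where two boundary arcs of $d_x$ meet). *)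

(* Defs.v *)
From HB Require Import structures.
From mathcomp Require Import all_boot all_order all_algebra.
From mathcomp Require Import all_classical all_reals.
Set Implicit Arguments. Unset Strict Implicit. Unset Printing Implicit Defensive.
Import Order.TTheory GRing.Theory Num.Theory.
Local Open Scope ring_scope.
Local Open Scope classical_set_scope.

Section Polycyl.
Variables (R : realType) (n : nat).

Definition enorm (v : 'rV[R]_(n.+2)) : R := Num.sqrt (\sum_i v ord0 i ^+ 2).

(* An n-dimensional affine subspace (the core of a polycylinder):
   base point cpt, and directions = rows of the rank-n matrix cdir. *)
Record core := Core {
  cpt : 'rV[R]_(n.+2);
  cdir : 'M[R]_(n, n.+2);
  cdir_free : row_free cdir }.

Definition affine_set (c : core) : set 'rV[R]_(n.+2) :=
  [set y | exists u : 'rV[R]_n, y = cpt c + u *m cdir c].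

Definition setdist (y : 'rV[R]_(n.+2)) (A : set 'rV[R]_(n.+2)) : R :=
  inf [set enorm (y - z) | z in A].

Definition polycyl (c : core) : set 'rV[R]_(n.+2) :=
  [set y | setdist y (affine_set c) <= 1].

Definition einterior (A : set 'rV[R]_(n.+2)) : set 'rV[R]_(n.+2) :=
  [set y | exists2 e : R, 0 < e & forall z, enorm (z - y) < e -> A z].

Definition packing (I : Type) (c : I -> core) : Prop :=
  (exists f : I -> nat, injective f) /\
  (forall j k : I, j <> k ->
     einterior (polycyl (c j)) `&` einterior (polycyl (c k)) = set0).

Definition dirichlet (I : Type) (c : I -> core) (i : I) : set 'rV[R]_(n.+2) :=
  [set y | forall j, j <> i -> setdist y (polycyl (c i)) <= setdist y (polycyl (c j))].

Definition orth_plane (c : core) (x : 'rV[R]_(n.+2)) : set 'rV[R]_(n.+2) :=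
  [set y | (y - x) *m (cdir c)^T = 0].

Definition slice (I : Type) (c : I -> core) (i : I) (x : 'rV[R]_(n.+2)) :=
  dirichlet c i `&` orth_plane (c i) x.

Definition slice_vertex (I : Type) (c : I -> core) (i : I) (x v : 'rV[R]_(n.+2)) : Prop :=
  [/\ slice c i x v,
      (forall e : R, 0 < e -> exists w, [/\ orth_plane (c i) x w, enorm (w - v) < e
                                          & ~ slice c i x w])
    & exists j k : I, [/\ j <> i, k <> i, j <> k,
        setdist v (polycyl (c j)) = setdist v (polycyl (c i))
      & setdist v (polycyl (c k)) = setdist v (polycyl (c i))]].

End Polycyl.

(* Main.v *)
Require Import Defs.
From HB Require Import structures.
From mathcomp Require Import all_boot all_order all_algebra.
From mathcomp Require Import all_classical all_reals.
From mathcomp Require Import ring lra.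
Set Implicit Arguments. Unset Strict Implicit. Unset Printing Implicit Defensive.
Import Order.TTheory GRing.Theory Num.Theory.
Local Open Scope ring_scope.
Local Open Scope classical_set_scope.

Section Aux.
Variables (R : realType) (n : nat).
Local Notation V := 'rV[R]_(n.+2).
Implicit Types (a b c y : V).

Definition sq (y : V) : R := \sum_i y ord0 i ^+ 2.
Definition dot (a b : V) : R := \sum_i a ord0 i * b ord0 i.

Lemma sq_ge0 y : 0 <= sq y.
Proof. by apply: sumr_ge0 => i _; rewrite sqr_ge0. Qed.

Lemma enorm_ge0 y : 0 <= enorm y.
Proof. exact: sqrtr_ge0. Qed.

Lemma enorm_sq y : enorm y ^+ 2 = sq y.
Proof. by rewrite /enorm sqr_sqrtr // sq_ge0. Qed.

Lemma sqD a b : sq (a + b) = sq a + sq b + 2 * dot a b.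
Proof.
rewrite /sq /dot mulr_sumr -!big_split /=; apply: eq_bigr => i _.
rewrite mxE; ring.
Qed.

Lemma sqZ k a : sq (k *: a) = k ^+ 2 * sq a.
Proof. rewrite /sq mulr_sumr; apply: eq_bigr => i _; rewrite mxE; ring. Qed.

Lemma sqN a : sq (- a) = sq a.
Proof. rewrite /sq; apply: eq_bigr => i _; rewrite mxE; ring. Qed.

Lemma sq0_eq a : sq a = 0 -> forall i, a ord0 i = 0.
Proof.
move=> h i; have /psumr_eq0P H : \sum_i a ord0 i ^+ 2 = 0 by [].
have := H (fun i _ => sqr_ge0 _) i isT.
by move/eqP; rewrite sqrf_eq0 => /eqP.
Qed.

Lemma dot_le a b : dot a b <= enorm a * enorm b.
Proof.
have key : 2 * dot a b * (enorm a * enorm b) <= 2 * (enorm a ^+ 2 * enorm b ^+ 2).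
  rewrite !enorm_sq /dot mulr_sumr mulr_suml.
  have -> : 2 * (sq a * sq b) = \sum_i (a ord0 i ^+ 2 * enorm b ^+ 2 + b ord0 i ^+ 2 * enorm a ^+ 2).
    rewrite big_split /= -!mulr_suml !enorm_sq -/(sq a) -/(sq b); ring.
  apply: ler_sum => i _.
  have := sqr_ge0 (a ord0 i * enorm b - b ord0 i * enorm a); nra.
have [ha|ha] := eqVneq (enorm a) 0.
  have : sq a = 0 by rewrite -enorm_sq ha expr0n.
  move/sq0_eq => h; rewrite /dot big1 ?ha ?mul0r // => i _; by rewrite h mul0r.
have [hb|hb] := eqVneq (enorm b) 0.
  have : sq b = 0 by rewrite -enorm_sq hb expr0n.
  move/sq0_eq => h; rewrite /dot big1 ?hb ?mulr0 // => i _; by rewrite h mulr0.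
have pa : 0 < enorm a by rewrite lt_neqAle eq_sym ha enorm_ge0.
have pb : 0 < enorm b by rewrite lt_neqAle eq_sym hb enorm_ge0.
have pab : 0 < enorm a * enorm b by apply: mulr_gt0.
nra.
Qed.

Lemma enormD a b : enorm (a + b) <= enorm a + enorm b.
Proof.
rewrite -[X in _ <= X]ger0_norm ?addr_ge0 ?enorm_ge0 //.
rewrite -sqrtr_sqr /enorm -/(sq _) ler_sqrt ?sqr_ge0 // sqD.
have := dot_le a b; rewrite /enorm -!/(sq _).
have := sqr_sqrtr (sq_ge0 a); have := sqr_sqrtr (sq_ge0 b).
move=> h1 h2 h3; nra.
Qed.

Lemma enormZ k a : enorm (k *: a) = `|k| * enorm a.
Proof. by rewrite /enorm -/(sq _) sqZ sqrtrM ?sqr_ge0 // sqrtr_sqr. Qed.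

Lemma enormN a : enorm (- a) = enorm a.
Proof. by rewrite /enorm -!/(sq _) sqN. Qed.

Lemma enormB a b : enorm (a - b) = enorm (b - a).
Proof. by rewrite -enormN opprB. Qed.

Lemma enorm_tri a b c : enorm (a - c) <= enorm (a - b) + enorm (b - c).
Proof. by have := enormD (a - b) (b - c); rewrite addrA subrK. Qed.

Lemma enorm0 : enorm (0 : V) = 0.
Proof. by rewrite -(scale0r (0 : V)) enormZ normr0 mul0r. Qed.

End Aux.

Section Geo.
Variables (R : realType) (n : nat).
Local Notation V := 'rV[R]_(n.+2).
Implicit Types (a b y z p q : V) (A : set V).

Lemma setdist_le A y z : A z -> setdist y A <= enorm (y - z).
Proof.
move=> Az; apply: ge_inf; last by exists z.
by exists 0 => _ [w _ <-]; exact: enorm_ge0.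
Qed.

Lemma setdist_lt A y r : (exists z, A z) -> setdist y A < r ->
  exists2 z, A z & enorm (y - z) < r.
Proof.
move=> [z Az] /inf_lt [].
  by exists (enorm (y - z)), z.
by move=> _ [w Aw <-] h; exists w.
Qed.

Lemma aff_cpt (c : core R n) : affine_set c (cpt c).
Proof. by exists 0; rewrite mul0mx addr0. Qed.

Lemma polycyl_cpt (c : core R n) : polycyl c (cpt c).
Proof.
rewrite /polycyl /=; apply: le_trans (setdist_le _ (aff_cpt c)) _.
by rewrite subrr enorm0.
Qed.

Lemma near_core (c : core R n) v r e : 0 < e -> setdist v (polycyl c) < r ->
  exists2 p, affine_set c p & enorm (v - p) < r + 1 + e.
Proof.
move=> e0 /(setdist_lt (ex_intro _ _ (polycyl_cpt c))) [z Cz hz].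
have : setdist z (affine_set c) < 1 + e by apply: le_lt_trans Cz _; lra.
move/(setdist_lt (ex_intro _ _ (aff_cpt c))) => [p Ap hp].
exists p => //; apply: le_lt_trans (enorm_tri v z p) _; lra.
Qed.

Lemma core_far (I : Type) (c : I -> core R n) j k p q :
  packing c -> j <> k -> affine_set (c j) p -> affine_set (c k) q ->
  2 <= enorm (p - q).
Proof.
move=> [_ hd] jk Ap Aq; rewrite leNgt; apply/negP => hlt.
pose m : V := 2^-1 *: (p + q).
have hmp : enorm (m - p) = enorm (p - q) / 2.
  rewrite -enormN /m.
  have -> : - (2^-1 *: (p + q) - p) = 2^-1 *: (p - q).
    by rewrite scalerDr scalerBr; apply/rowP => i; rewrite !mxE; field.
  by rewrite enormZ ger0_norm ?invr_ge0 ?ler0n // mulrC.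
have hmq : enorm (m - q) = enorm (p - q) / 2.
  rewrite /m.
  have -> : 2^-1 *: (p + q) - q = 2^-1 *: (p - q).
    by rewrite scalerDr scalerBr; apply/rowP => i; rewrite !mxE; field.
  by rewrite enormZ ger0_norm ?invr_ge0 ?ler0n // mulrC.
have inter : forall (cc : core R n) a, affine_set cc a -> enorm (m - a) < 1 ->
    einterior (polycyl cc) m.
  move=> cc a Aa h; exists (1 - enorm (m - a)); first by lra.
  move=> w hw; rewrite /polycyl /=; apply: le_trans (setdist_le _ Aa) _.
  have := enorm_tri w m a; lra.
have : (einterior (polycyl (c j)) `&` einterior (polycyl (c k))) m.
  split; [apply: (inter _ p) | apply: (inter _ q)] => //; lra.
by rewrite hd.
Qed.

Lemma own_dist (c : core R n) x v : affine_set c x ->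
  setdist v (polycyl c) <= Num.max (enorm (v - x)) 1 - 1.
Proof.
move=> Ax; set T := enorm (v - x).
have T0 : 0 <= T by exact: enorm_ge0.
have [T1|T1] := leP T 1.
  rewrite subrr.
  have Cv : polycyl c v by apply: le_trans (setdist_le _ Ax) _.
  by apply: le_trans (setdist_le _ Cv) _; rewrite subrr enorm0.
have Tn0 : T != 0 by rewrite gt_eqF //; lra.
pose z := x + T^-1 *: (v - x).
have Cz : polycyl c z.
  apply: le_trans (setdist_le _ Ax) _.
  rewrite /z addrC addKr enormZ ger0_norm ?invr_ge0 // mulVf //.
apply: le_trans (setdist_le _ Cz) _.
have -> : v - z = (1 - T^-1) *: (v - x).
  by rewrite /z scalerBl scale1r opprD addrA.
have hT : 0 <= 1 - T^-1.
  rewrite subr_ge0 invf_le1 //; [lra | lra].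
rewrite enormZ ger0_norm // -/T mulrBl mul1r mulVf //.
Qed.

End Geo.

Lemma sum3 (R : realType) (n : nat) (a b c : 'rV[R]_(n.+2)) :
  sq (a - b) + sq (b - c) + sq (a - c) <= 3 * (sq a + sq b + sq c).
Proof.
rewrite /sq -!big_split /= mulr_sumr; apply: ler_sum => i _.
rewrite !mxE.
have := sqr_ge0 (a ord0 i + b ord0 i + c ord0 i); nra.
Qed.

Lemma diffB (R : realType) (n : nat) (p q v : 'rV[R]_(n.+2)) :
  (p - v) - (q - v) = p - q.
Proof. by rewrite opprB addrA subrK. Qed.

Theorem mainTheorem5 (R : realType) (n : nat) (I : Type) (c : I -> core R n)
  (hpack : packing c) (i : I) (x : 'rV[R]_(n.+2)) (hx : affine_set (c i) x)
  (v : 'rV[R]_(n.+2)) (hv : slice_vertex c i x v) :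
  2 / Num.sqrt 3 <= enorm (v - x).
Proof.
move: hv => [_ _ [j [k [ji ki jk hj hk]]]].
set b := 2 / Num.sqrt 3.
have s3 : 0 < Num.sqrt 3 :> R by rewrite sqrtr_gt0 ltr0n.
have hb0 : 0 < b by rewrite /b divr_gt0 // ltr0n.
have hb2 : 3 * b ^+ 2 = 4.
  rewrite /b exprMn exprVn sqr_sqrtr ?ler0n //; field.
  done.
set T := enorm (v - x).
have T0 : 0 <= T by exact: enorm_ge0.
rewrite leNgt; apply/negP => Tb.
set M := Num.max T 1.
have hM : M < b.
  rewrite /M; have [_|_] := leP T 1; last by [].
  nra.
have M1 : T <= M by rewrite /M le_max lexx.
set e := b - M.
have e0 : 0 < e by rewrite /e subr_gt0.
have hs := own_dist v hx; rewrite -/T -/M in hs.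
have [pj Aj hpj] : exists2 p, affine_set (c j) p & enorm (v - p) < M - 1 + e / 2 + 1 + e / 2.
  apply: near_core; first by rewrite divr_gt0.
  by rewrite hj; apply: le_lt_trans hs _; rewrite ltrDl divr_gt0.
have [pk Ak hpk] : exists2 p, affine_set (c k) p & enorm (v - p) < M - 1 + e / 2 + 1 + e / 2.
  apply: near_core; first by rewrite divr_gt0.
  by rewrite hk; apply: le_lt_trans hs _; rewrite ltrDl divr_gt0.
have d1 := core_far hpack ji Aj hx.
have d2 := core_far hpack ki Ak hx.
have d3 := core_far hpack jk Aj Ak.
have := sum3 (pj - v) (pk - v) (x - v).
rewrite !diffB -!enorm_sq.
rewrite (enormB pj v) (enormB pk v) (enormB x v) -/T.
have := enorm_ge0 (v - pj); have := enorm_ge0 (v - pk).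
have := enorm_ge0 (pj - pk); have := enorm_ge0 (pk - x); have := enorm_ge0 (pj - x).
have hb' : M - 1 + e / 2 + 1 + e / 2 = b by rewrite /e; field.
rewrite hb' in hpj hpk.
move=> g1 g2 g3 g4 g5 H.
have : T < b by lra.
nra.
Qed.
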